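(* Let $R$ be a ring satisfying the ascending chain condition on left annihilators, let $\mathbb S=R[X^{\pm1};\boldsymbol\alpha]$ be a skew Laurent polynomial ring of bijective type, let $\mathcal T$ be a submonoid of the free abelian group $G_X$, and let $A=R[\mathcal T;\boldsymbol\alpha]=\bigoplus_{\tau\in\mathcal T}R\tau\subseteq\mathbb S$. If $R$ is prime, then $A$ is prime; if $R$ is semiprime, then $A$ is semiprime.
   Context: Skew Laurent polynomial ring of bijective type: $X$ is a set of commuting variables, $G_X$ is the free abelian group on $X$, and $\mathbb S=R[X^{\pm1};\boldsymbol\alpha]$ is the ring which is a free left $R$-module with basis $G_X$, terms multiplying as in $G_X$, and for each $x\in X$ a ring automorphism $\alpha_x$ of $R$ with $xa=\alpha_x(a)x$, $x^{-1}a=\alpha_x^{-1}(a)x^{-1}$ for $a\in R$. *)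

(* Defs.v *)
From HB Require Import structures.
From mathcomp Require Import all_boot all_order all_algebra.
From mathcomp Require Import finmap.
From mathcomp.multinomials Require Import freeg monalg.

Set Implicit Arguments.
Unset Strict Implicit.
Unset Printing Implicit Defensive.

Import GRing.Theory.
Local Open Scope ring_scope.

Definition GX (X : choiceType) := {freeg X / int}.

(* The underlying left R-module of the skew Laurent polynomial ring
   S = R[X^{+-1}; alpha]: finitely supported functions G_X -> R,
   i.e. sums  \sum_g r_g g  with r_g in R. *)
Definition SLaurent (R : nzRingType) (X : choiceType) := {malg R[GX X]}.

(* The action of the group G_X on R is given as a group homomorphism
   alpha : G_X -> Aut(R), i.e. g |-> alpha^g, which is the same data as a
   commuting family of automorphisms (alpha_x)_{x in X}
   (alpha_x = alpha (x as a generator), alpha_x^{-1} = alpha (- x)). *)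
Definition skew_action (R : nzRingType) (X : choiceType)
    (alpha : GX X -> {rmorphism R -> R}) : Prop :=
  (forall r, alpha 0 r = r) /\
  (forall g h r, alpha (g + h) r = alpha g (alpha h r)).

Definition mulS (R : nzRingType) (X : choiceType)
    (alpha : GX X -> {rmorphism R -> R}) (f g : SLaurent R X) : SLaurent R X :=
  \sum_(s <- msupp f) \sum_(t <- msupp g)
     mkmalgU (s + t) (f@_s * alpha s (g@_t)).

Definition inA (R : nzRingType) (X : choiceType) (T : GX X -> Prop)
    (f : SLaurent R X) : Prop :=
  forall s, s \in msupp f -> T s.

Definition submonoid (G : zmodType) (T : G -> Prop) : Prop :=
  T 0 /\ (forall s t, T s -> T t -> T (s + t)).

Definition prime_ring (R : nzRingType) : Prop :=
  forall a b : R, (forall r : R, a * r * b = 0) -> a = 0 \/ b = 0.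

Definition semiprime_ring (R : nzRingType) : Prop :=
  forall a : R, (forall r : R, a * r * a = 0) -> a = 0.

Definition prime_A (R : nzRingType) (X : choiceType)
    (alpha : GX X -> {rmorphism R -> R}) (T : GX X -> Prop) : Prop :=
  forall a b : SLaurent R X, inA T a -> inA T b ->
    (forall r, inA T r -> mulS alpha (mulS alpha a r) b = 0) -> a = 0 \/ b = 0.

Definition semiprime_A (R : nzRingType) (X : choiceType)
    (alpha : GX X -> {rmorphism R -> R}) (T : GX X -> Prop) : Prop :=
  forall a : SLaurent R X, inA T a ->
    (forall r, inA T r -> mulS alpha (mulS alpha a r) a = 0) -> a = 0.

Definition left_ann (R : nzRingType) (S : R -> Prop) : R -> Prop :=
  fun r => forall s, S s -> r * s = 0.

Definition acc_left_ann (R : nzRingType) : Prop :=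
  forall S : nat -> (R -> Prop),
    (forall n r, left_ann (S n) r -> left_ann (S n.+1) r) ->
    exists N, forall n, (N <= n)%N ->
      forall r, left_ann (S n) r <-> left_ann (S N) r.

(* Main.v *)
Require Import Defs.
From HB Require Import structures.
From mathcomp Require Import all_boot all_order all_algebra.
From mathcomp Require Import finmap.
From mathcomp.multinomials Require Import freeg monalg.
From mathcomp Require Import zify.
From Stdlib Require Import Classical.
Set Implicit Arguments. Unset Strict Implicit. Unset Printing Implicit Defensive.
Import Order.TTheory GRing.Theory Num.Theory.
Local Open Scope ring_scope.

Section Phi.
Variable X : choiceType.

Definition phi (xs : seq X) (B : int) (u : GX X) : int :=
  foldr (fun x acc => coeff x u + B * acc) 0 xs.

Lemma phiD xs B u v : phi xs B (u + v) = phi xs B u + phi xs B v.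
Proof.
elim: xs => [|x xs IH] /=; first by rewrite addr0.
rewrite IH coeffD; lia.
Qed.

Lemma phiB xs B u v : phi xs B (u - v) = phi xs B u - phi xs B v.
Proof.
elim: xs => [|x xs IH] /=; first by rewrite subr0.
rewrite IH coeffB; lia.
Qed.

Lemma phi0_coeff xs B d : (forall x, x \in xs -> `|coeff x d| < B) ->
  phi xs B d = 0 -> forall x, x \in xs -> coeff x d = 0.
Proof.
elim: xs => [|y xs IH] //= Hb Hp x.
change (coeff y d + B * phi xs B d = 0) in Hp.
have Hy := Hb y (mem_head _ _).
have Hxs : forall x, x \in xs -> `|coeff x d| < B.
  by move=> z hz; apply: Hb; rewrite in_cons hz orbT.
have H0 : phi xs B d = 0.
  apply/eqP; apply/negP => /eqP Hn.
  have : coeff y d = - (B * phi xs B d) by lia.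
  move=> E; move: Hy; rewrite E. nia.
rewrite in_cons => /orP [/eqP ->|hx]; last by apply: IH.
move: Hp; rewrite H0; lia.
Qed.

Lemma bound_seq (T : eqType) (s : seq T) (f : T -> int) :
  exists M : int, 0 <= M /\ forall x, x \in s -> `|f x| <= M.
Proof.
elim: s => [|y s [M [HM IH]]]; first by exists 0.
exists (`|f y| + M); split; first by nia.
move=> x; rewrite in_cons => /orP [/eqP ->|hx]; first by nia.
have := IH x hx; nia.
Qed.

Lemma bound_F (F : seq (GX X)) :
  exists M : int, 0 <= M /\ forall u x, u \in F -> `|coeff x u| <= M.
Proof.
elim: F => [|u F [M [HM IH]]]; first by exists 0.
have [Mu [HMu Hu]] := bound_seq (dom u) (fun x => coeff x u).
exists (Mu + M); split; first by nia.
move=> v x; rewrite in_cons => /orP [/eqP ->|hv].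
  case hx: (x \in dom u); first by have := Hu x hx; nia.
  by rewrite coeff_outdom ?hx // normr0; nia.
have := IH v x hv; nia.
Qed.

Lemma norm_diff_lt (a b M : int) : `|b| <= M -> `|a| <= M -> `|a - b| < 2 * M + 1.
Proof. lia. Qed.

Lemma phi_inj (F : seq (GX X)) : exists xs B,
  forall u v, u \in F -> v \in F -> phi xs B u = phi xs B v -> u = v.
Proof.
have [M [HM HF]] := bound_F F.
exists (flatten [seq dom u | u <- F]), (2 * M + 1) => u v hu hv E.
have E0 : phi (flatten [seq dom u | u <- F]) (2 * M + 1) (u - v) = 0.
  by rewrite phiB E subrr.
have H := phi0_coeff _ E0.
apply/eqP/freeg_eqP => x.
case hx: (x \in flatten [seq dom u | u <- F]).
  apply/eqP; rewrite -subr_eq0 -coeffB; apply/eqP; apply: H => //.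
  move=> y _; rewrite coeffB; have := HF u y hu; have := HF v y hv.
  exact: norm_diff_lt.
have nu : forall w, w \in F -> x \notin dom w.
  move=> w hw; apply/negP => hxw; move/negP: hx; apply; apply/flatten_mapP.
  by exists w.
by rewrite !coeff_outdom ?nu.
Qed.

Lemma exists_max (T : eqType) (f : T -> int) (s : seq T) x0 : x0 \in s ->
  exists2 m, m \in s & forall y, y \in s -> f y <= f m.
Proof.
elim: s x0 => [|y s IH] x0 //= _.
case: s IH => [|z s] IH.
  exists y; first exact: mem_head.
  by move=> w; rewrite in_cons orbF => /eqP ->.
have [m hm Hm] := IH z (mem_head _ _).
case: (lerP (f m) (f y)) => Hc.
  exists y; first exact: mem_head.
  move=> w; rewrite in_cons => /orP [/eqP ->//|hw].
  exact: le_trans (Hm w hw) Hc.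
exists m; first by rewrite in_cons hm orbT.
move=> w; rewrite in_cons => /orP [/eqP ->|hw]; last exact: Hm.
exact: ltW.
Qed.
End Phi.

Section Skew.
Variables (R : nzRingType) (X : choiceType) (alpha : GX X -> {rmorphism R -> R}).

Lemma mulS_coef (f g : SLaurent R X) k : (mulS alpha f g)@_k =
  \sum_(s <- msupp f) \sum_(t <- msupp g) (f@_s * alpha s (g@_t)) *+ (s + t == k).
Proof.
rewrite /mulS raddf_sum; apply: eq_bigr => s _.
rewrite raddf_sum; apply: eq_bigr => t _. exact: mcoeffU.
Qed.

Lemma mulS_coef0 (f g : SLaurent R X) k :
  (forall s t, s \in msupp f -> t \in msupp g -> s + t <> k) ->
  (mulS alpha f g)@_k = 0.
Proof.
move=> H; rewrite mulS_coef big1_seq // => s /andP [_ hs].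
rewrite big1_seq // => t /andP [_ ht].
by case: eqP => // /(H s t hs ht).
Qed.

Variable phi : GX X -> int.
Hypothesis phiD : forall u v, phi (u + v) = phi u + phi v.

Lemma lia_help1 (a b c d : int) : c + d <= a + b -> a < c -> b < d -> False.
Proof. lia. Qed.
Lemma lia_help2 (a b c : int) : c + b <= a + b -> a < c -> False.
Proof. lia. Qed.
Lemma lia_help3 (a b d : int) : a + d <= a + b -> b < d -> False.
Proof. lia. Qed.

Definition top (f : SLaurent R X) s :=
  forall s', s' \in msupp f -> phi s' < phi s \/ s' = s.

Lemma top_pair f g s t s' t' : top f s -> top g t ->
  s' \in msupp f -> t' \in msupp g -> phi (s' + t') >= phi (s + t) ->
  s' = s /\ t' = t.
Proof.
move=> Hf Hg hs ht; rewrite !phiD.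
case: (Hf s' hs) => [h1|E1]; case: (Hg t' ht) => [h2|E2] h //.
- exfalso; move: h h1 h2; exact: lia_help1.
- exfalso; subst t'; move: h h1; exact: lia_help2.
- exfalso; subst s'; move: h h2; exact: lia_help3.
Qed.

Lemma top_mul f g s t : top f s -> top g t ->
  top (mulS alpha f g) (s + t) /\
  (mulS alpha f g)@_(s + t) = f@_s * alpha s (g@_t).
Proof.
move=> Hf Hg; split.
  move=> u hu.
  have [[s' [t' [hs' [ht' E]]]]|] : (exists s' t', s' \in msupp f /\ t' \in msupp g /\ s' + t' = u) \/
     ~ (exists s' t', s' \in msupp f /\ t' \in msupp g /\ s' + t' = u).
    by apply: classic.
    case: (ltP (phi u) (phi (s + t))) => [h|h]; first by left.
    right; rewrite -E in h; have [E1 E2] := top_pair Hf Hg hs' ht' h; by rewrite -E E1 E2.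
  move=> Hn; exfalso; move: hu; rewrite -mcoeff_neq0 mulS_coef0 ?eqxx //.
  move=> s' t' hs' ht' E; apply: Hn; by exists s', t'.
have Hpair : forall s' t', s' \in msupp f -> t' \in msupp g -> s' + t' = s + t ->
    s' = s /\ t' = t.
  move=> s' t' hs' ht' E; apply: (top_pair Hf Hg hs' ht'); by rewrite E.
case hs: (s \in msupp f); last first.
  rewrite (mcoeff_outdom (negbT hs)) mul0r mulS_coef0 // => s' t' hs' ht' E.
  by have [E1 _] := Hpair _ _ hs' ht' E; move: hs; rewrite -E1 hs'.
case ht: (t \in msupp g); last first.
  rewrite (mcoeff_outdom (negbT ht)) rmorph0 mulr0 mulS_coef0 // => s' t' hs' ht' E.
  by have [_ E1] := Hpair _ _ hs' ht' E; move: ht; rewrite -E1 ht'.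
rewrite mulS_coef (bigD1_seq s) ?fset_uniq //= (bigD1_seq t) ?fset_uniq //= eqxx mulr1n.
rewrite big1_seq ?addr0; last first.
  move=> t' /andP [nt ht']; case: eqP => // /(Hpair _ _ hs ht') [_ E].
  by move: nt; rewrite E eqxx.
rewrite big1_seq ?addr0 // => s' /andP [ns hs'].
rewrite big1_seq // => t' /andP [_ ht']; case: eqP => // /(Hpair _ _ hs' ht') [E _].
by move: ns; rewrite E eqxx.
Qed.

Lemma top_U m (x : R) : top (mkmalgU m x) m.
Proof.
move=> s' hs'; right; have := fsubsetP (msuppU_le) s' hs'; by rewrite inE => /eqP.
Qed.

End Skew.

Lemma lead (R : nzRingType) (X : choiceType) (phi : GX X -> int) (a : SLaurent R X) :
  (forall u v, u \in msupp a -> v \in msupp a -> phi u = phi v -> u = v) ->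
  a != 0 -> exists s, top phi a s /\ s \in msupp a.
Proof.
move=> Hinj a0.
case: (fset_0Vmem (msupp a)) => [E|[k hk]].
  case/eqP: a0; apply/malgP => k; rewrite mcoeff0 mcoeff_outdom // E inE.
  done.
have [m hm Hm] := exists_max phi hk.
exists m; split => // s' hs'.
have := Hm s' hs'; rewrite le_eqVlt => /orP [/eqP E|]; last by left.
by right; apply: Hinj.
Qed.

Lemma alphaK (R : nzRingType) (X : choiceType) (alpha : GX X -> {rmorphism R -> R}) :
  skew_action alpha -> forall g x, alpha (-g) (alpha g x) = x.
Proof. by case=> H0 Hadd g x; rewrite -Hadd addNr H0. Qed.

Lemma alphaK' (R : nzRingType) (X : choiceType) (alpha : GX X -> {rmorphism R -> R}) :
  skew_action alpha -> forall g x, alpha g (alpha (-g) x) = x.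
Proof. by case=> H0 Hadd g x; rewrite -Hadd subrr H0. Qed.

Lemma inA_U (R : nzRingType) (X : choiceType) (T : GX X -> Prop) m (x : R) :
  T m -> inA T (mkmalgU m x : SLaurent R X).
Proof.
move=> Tm u hu; have := fsubsetP (msuppU_le) u hu; by rewrite inE => /eqP ->.
Qed.

Theorem mainTheorem6 (R : nzRingType) (X : choiceType)
    (alpha : GX X -> {rmorphism R -> R}) (T : GX X -> Prop) :
  acc_left_ann R ->
  skew_action alpha ->
  submonoid T ->
  (prime_ring R -> prime_A alpha T) /\
  (semiprime_ring R -> semiprime_A alpha T).
Proof.
move=> Hacc Hs [T0 TD]; split.
- move=> Hp a b Ha Hb Hab.
  case: (eqVneq a 0) => [->|a0]; first by left.
  case: (eqVneq b 0) => [->|b0]; first by right.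
  exfalso.
  have [xs [B Hinj]] := phi_inj (msupp a ++ msupp b).
  have phD := phiD xs B.
  have [s [Ts ss]] : exists s, top (phi xs B) a s /\ s \in msupp a.
    apply: lead a0 => u v hu hv; apply: Hinj; by rewrite mem_cat ?hu ?hv.
  have [t [Tt st]] : exists t, top (phi xs B) b t /\ t \in msupp b.
    apply: lead b0 => u v hu hv; apply: Hinj; by rewrite mem_cat ?hu ?hv ?orbT.
  have key : forall y, a@_s * y * alpha s (b@_t) = 0.
    move=> y.
    have Ar := @inA_U R X T 0 (alpha (-s) y) T0.
    have [t1 e1] := top_mul alpha phD Ts (@top_U R X (phi xs B) 0 (alpha (-s) y)).
    have [t2 e2] := top_mul alpha phD t1 Tt.
    have := Hab _ Ar; move/(congr1 (mcoeff (s + 0 + t))).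
    by rewrite e2 e1 mcoeff0 mcoeffUU alphaK' // addr0.
  case: (Hp _ _ key) => [c0|d0].
    by move: ss; rewrite -mcoeff_neq0 c0 eqxx.
  move: st; rewrite -mcoeff_neq0 -(alphaK Hs s (b@_t)) d0 rmorph0 eqxx //.
- move=> Hsp a Ha Haa.
  case: (eqVneq a 0) => [//|a0]; exfalso.
  have [xs [B Hinj]] := phi_inj (msupp a).
  have phD := phiD xs B.
  have [s [Ts ss]] := lead Hinj a0.
  have Tn : forall n, T (s *+ n).
    elim=> [|n IH]; first by rewrite mulr0n.
    by rewrite mulrS; apply: TD => //; apply: Ha.
  have key : forall n y, a@_s * y * alpha (s *+ n.+1) (a@_s) = 0.
    move=> n y.
    have Ar := @inA_U R X T (s *+ n) (alpha (-s) y) (Tn n).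
    have [t1 e1] := top_mul alpha phD Ts (@top_U R X (phi xs B) (s *+ n) (alpha (-s) y)).
    have [t2 e2] := top_mul alpha phD t1 Ts.
    have := Haa _ Ar; move/(congr1 (mcoeff (s + s *+ n + s))).
    by rewrite e2 e1 mcoeff0 mcoeffUU alphaK' // -mulrS.
  set c := a@_s.
  pose S (n : nat) := fun z : R => exists m, (n <= m)%N /\ z = alpha (s *+ m) c.
  have Hchain : forall n r, left_ann (S n) r -> left_ann (S n.+1) r.
    move=> n r H z [m [hm ->]]; apply: H; exists m; split => //; exact: ltnW.
  have [N HN] := Hacc S Hchain.
  have HN1 := HN N.+1 (leqnSn N).
  have Hcomp : forall m k x, alpha (s *+ m) (alpha (s *+ k) x) = alpha (s *+ (m + k)) x.
    by case: Hs => _ Hadd m k x; rewrite -Hadd mulrnDr.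
  have cyc : forall y, c * y * c = 0.
    move=> y.
    have L : left_ann (S N.+1) (alpha (s *+ N) (c * y)).
      move=> z [m [hm ->]].
      have Em : m = (N + ((m - N).-1).+1)%N.
        rewrite prednK ?subn_gt0 // subnKC //; exact: ltnW.
      rewrite Em -Hcomp -rmorphM key rmorph0 //.
    have := (proj1 (HN1 _) L) (alpha (s *+ N) c).
    rewrite -rmorphM => H.
    have := H (ex_intro _ N (conj (leqnn N) erefl)).
    move/(congr1 (alpha (- (s *+ N)))); by rewrite alphaK // rmorph0.
  have := Hsp c cyc; move=> c0.
  by move: ss; rewrite -mcoeff_neq0 -/c c0 eqxx.
Qed.
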